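(* For each $n\in\mathbb{N}$, the $\mathbb{Z}$-linear map $\mathbf{f}_n:QSymm\to QSymm$ given on compositions by $\mathbf{f}_n([a_1,\dots,a_m])=[na_1,\dots,na_m]$ is a Hopf algebra endomorphism of $QSymm$; $\mathbf{f}_1=\mathrm{id}$, $\mathbf{f}_n\mathbf{f}_m=\mathbf{f}_{nm}$; $\mathbf{f}_n$ maps the subring $Symm\subset QSymm$ of symmetric functions into itself, where it acts as the Frobenius operator determined by $\mathbf{f}_n(p_k)=p_{nk}$ on the power sums $p_k=\sum_i X_i^k$; and for every prime $p$ and every $x\in QSymm$, $\mathbf{f}_p(x)\equiv x^p \pmod{p\,QSymm}$. *)

(* Defs.v *)
From HB Require Import structures.
From mathcomp Require Import all_boot all_order all_algebra.
From mathcomp Require Import finmap.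
From mathcomp.multinomials Require Import monalg.
Set Implicit Arguments. Unset Strict Implicit. Unset Printing Implicit Defensive.
Import Order.TTheory GRing.Theory Num.Theory.
Local Open Scope ring_scope.

(* The ambient free Z-module on words over nat; QSymm is the Z-submodule
   spanned by the basis elements [a_1;...;a_m] = << [:: a_1; ...; a_m] >>
   indexed by compositions (all parts positive). *)
Definition QS := {malg int[seq nat]}.
(* QSymm (x) QSymm: free Z-module on pairs of words *)
Definition QS2 := {malg int[(seq nat * seq nat)%type]}.

Definition is_comp (s : seq nat) : bool := all (fun a => 0 < a)%N s.

Definition inQSymm (x : QS) : Prop := forall s, s \in msupp x -> is_comp s.

Definition linext (K K' : choiceType) (h : K -> {malg int[K']})
  (x : {malg int[K]}) : {malg int[K']} :=
  \sum_(k <- msupp x) x@_k *: h k.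

Fixpoint qsh (s : seq nat) : seq nat -> seq (seq nat) :=
  match s with
  | [::] => fun t => [:: t]
  | a :: s' =>
      fix qsh_aux (t : seq nat) : seq (seq nat) :=
        match t with
        | [::] => [:: a :: s']
        | b :: t' =>
            map (cons a) (qsh s' t) ++ map (cons b) (qsh_aux t')
              ++ map (cons (a + b)%N) (qsh s' t')
        end
  end.

Definition qmul (x y : QS) : QS :=
  linext (fun s => linext (fun t => \sum_(u <- qsh s t) (<< u >> : QS)) y) x.

Definition qone : QS := << [::] >>.

Definition qexp (x : QS) (n : nat) : QS := iter n (qmul x) qone.

Definition qcomul (x : QS) : QS2 :=
  linext (fun s => \sum_(i < (size s).+1)
                     (<< (take i s, drop i s) >> : QS2)) x.

Definition qcounit (x : QS) : int := x@_[::].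

Definition frob (n : nat) (x : QS) : QS :=
  linext (fun s => (<< map (muln n) s >> : QS)) x.

Definition frob2 (n : nat) (z : QS2) : QS2 :=
  linext (fun st => (<< (map (muln n) st.1, map (muln n) st.2) >> : QS2)) z.

(* Symm inside QSymm: the Z-span of the monomial symmetric functions
   m_lambda = sum of [alpha] over all rearrangements alpha of lambda,
   i.e. the elements of QSymm whose coefficients are invariant under
   rearrangement of compositions. *)
Definition inSymm (x : QS) : Prop :=
  inQSymm x /\ forall s t : seq nat, perm_eq s t -> x@_s = x@_t.

(* power sum p_k = sum_i X_i^k = [k] *)
Definition psum (k : nat) : QS := << [:: k] >>.

(* Main.v *)
Require Import Defs.
From HB Require Import structures.
From mathcomp Require Import all_boot all_order all_algebra.
From mathcomp Require Import finmap.
From mathcomp.multinomials Require Import monalg.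
From mathcomp Require Import ring.
Import Order.TTheory GRing.Theory Num.Theory.
Local Open Scope ring_scope.
Set Implicit Arguments. Unset Strict Implicit.


Section Lin.
Variables (K K' : choiceType).
Implicit Types (h : K -> {malg int[K']}) (x y : {malg int[K]}).

Lemma linext_sub h x (B : {fset K}) : (msupp x `<=` B)%fset ->
  linext h x = \sum_(k <- B) x@_k *: h k.
Proof.
move=> sub; rewrite /linext; apply: big_fset_incl => // k _ kn.
by rewrite mcoeff_outdom // scale0r.
Qed.

Lemma linextL h (a : int) x y : linext h (a *: x + y) = a *: linext h x + linext h y.
Proof.
set B := (msupp (a *: x + y) `|` (msupp x `|` msupp y))%fset.
rewrite (@linext_sub h (a *: x + y) B) ?fsubsetUl //.
rewrite (@linext_sub h x B); last by rewrite /B fsubsetU // fsubsetUl orbT.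
rewrite (@linext_sub h y B); last by rewrite /B fsubsetU // fsubsetUr orbT.
rewrite scaler_sumr -big_split /=; apply: eq_bigr => k _.
by rewrite mcoeffD mcoeffZ scalerDl scalerA.
Qed.

Lemma linextU h k : linext h << k >> = h k.
Proof. by rewrite /linext msuppU oner_eq0 big_seq_fset1 mcoeffUU scale1r. Qed.

Lemma linext_coef h x s : (linext h x)@_s = \sum_(k <- msupp x) x@_k * (h k)@_s.
Proof. rewrite /linext raddf_sum; apply: eq_bigr => k _. exact: mcoeffZ. Qed.

Lemma eq_linext h h' x : (forall k, h k = h' k) -> linext h x = linext h' x.
Proof. by move=> e; rewrite /linext; apply: eq_bigr => k _; rewrite e. Qed.

Lemma sum_coef_eq x k : \sum_(j <- msupp x) x@_j * (j == k)%:R = x@_k.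
Proof.
have [kin|kn] := boolP (k \in msupp x).
  rewrite (big_fsetD1 k) //= eqxx mulr1 big1_fset ?addr0 // => j.
  by rewrite in_fsetD1 => /andP[/negbTE -> _]; rewrite mulr0.
rewrite mcoeff_outdom // big1_fset // => j jin _.
by case: eqP jin kn => [-> -> //|]; rewrite mulr0.
Qed.

Lemma linext_inj (f : K -> K') x k : injective f ->
  (linext (fun j => << f j >>) x)@_(f k) = x@_k.
Proof.
move=> fi; rewrite linext_coef -[RHS]sum_coef_eq; apply: eq_bigr => j _.
by rewrite mcoeffU inj_eq.
Qed.

Lemma linext_notim (f : K -> K') x s : (forall k, f k != s) ->
  (linext (fun j => << f j >>) x)@_s = 0.
Proof.
move=> fs; rewrite linext_coef big1 // => j _.
by rewrite mcoeffU (negbTE (fs j)) mulr0.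
Qed.

Lemma linext_zero h x s : (forall k, k \in msupp x -> (h k)@_s = 0) -> (linext h x)@_s = 0.
Proof. by move=> H; rewrite linext_coef big_seq big1 // => k /H ->; rewrite mulr0. Qed.

End Lin.

Definition islin (K K' : choiceType) (F : {malg int[K]} -> {malg int[K']}) :=
  forall (a : int) x y, F (a *: x + y) = a *: F x + F y.

Section Lin2.
Variables (K K' K'' : choiceType).
Variable F : {malg int[K']} -> {malg int[K'']}.
Hypothesis Fl : islin F.

Lemma islin0 : F 0 = 0.
Proof. have H := Fl 1 0 0; rewrite !scale1r addr0 in H. by apply/(@addrI _ (F 0)); rewrite addr0 -H. Qed.
Lemma islinD x y : F (x + y) = F x + F y.
Proof. by rewrite -[x]scale1r Fl !scale1r. Qed.
Lemma islinZ a x : F (a *: x) = a *: F x.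
Proof. by rewrite -[a *: x]addr0 Fl islin0 addr0. Qed.
Lemma islin_sum I (r : seq I) (P : pred I) (v : I -> _) :
  F (\sum_(i <- r | P i) v i) = \sum_(i <- r | P i) F (v i).
Proof. exact: (big_morph F islinD islin0). Qed.

Lemma linext_comp (h : K -> {malg int[K']}) x :
  F (linext h x) = linext (fun k => F (h k)) x.
Proof. by rewrite /linext islin_sum; apply: eq_bigr => k _; rewrite islinZ. Qed.
End Lin2.

Lemma linext_lin (K K' : choiceType) (h : K -> {malg int[K']}) : islin (linext h).
Proof. by move=> a x y; apply: linextL. Qed.

Lemma qsh_nil_r s : qsh s [::] = [:: s].
Proof. by case: s. Qed.

Lemma qsh_cons a s b t : qsh (a :: s) (b :: t) =
  map (cons a) (qsh s (b :: t)) ++ map (cons b) (qsh (a :: s) t)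
  ++ map (cons (a + b)%N) (qsh s t).
Proof. by []. Qed.

Lemma map_map_cons (f : nat -> nat) a (L : seq (seq nat)) :
  map (map f) (map (cons a) L) = map (cons (f a)) (map (map f) L).
Proof. by rewrite -!map_comp. Qed.

Lemma qsh_map (f : nat -> nat) (fD : forall a b, f (a + b)%N = (f a + f b)%N) s t :
  map (map f) (qsh s t) = qsh (map f s) (map f t).
Proof.
elim: s t => [|a s IHs] t; first by [].
elim: t => [|b t IHt]; first by rewrite !qsh_nil_r.
rewrite [map f (a :: s)]/= [map f (b :: t)]/= !qsh_cons !map_cat !map_map_cons.
by rewrite IHs IHt IHs fD.
Qed.

Lemma qsh_comp s t : is_comp s -> is_comp t -> all is_comp (qsh s t).
Proof.
elim: s t => [|a s IHs] t; first by rewrite /= andbT.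
elim: t => [|b t IHt]; first by rewrite qsh_nil_r /= andbT.
move=> cs ct; rewrite qsh_cons !all_cat.
move: (cs) (ct) => /andP[a0 cs'] /andP[b0 ct'].
have H (c : nat) L : (0 < c)%N -> all is_comp L -> all is_comp (map (cons c) L).
  by move=> c0 /allP HL; apply/allP => u /mapP[v vL ->]; by move: (HL v vL); rewrite /is_comp /= c0.
rewrite !H ?IHs ?IHt //; exact: ltn_addr.
Qed.

Definition Q (s t : seq nat) : QS := \sum_(u <- qsh s t) (<< u >> : QS).

Lemma frob_lin n : islin (frob n).
Proof. exact: linext_lin. Qed.

Lemma frobU n s : frob n << s >> = << map (muln n) s >>.
Proof. exact: linextU. Qed.

Lemma frobQ n s t : frob n (Q s t) = Q (map (muln n) s) (map (muln n) t).
Proof.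
rewrite /Q (islin_sum (frob_lin n)) -qsh_map; last by move=> a b; rewrite mulnDr.
by rewrite big_map; apply: eq_bigr => u _; rewrite frobU.
Qed.

Lemma qmulE x y : qmul x y = linext (fun s => linext (Q s) y) x.
Proof. by []. Qed.

Lemma frob_mul n x y : frob n (qmul x y) = qmul (frob n x) (frob n y).
Proof.
rewrite !qmulE (linext_comp (frob_lin n)).
rewrite [frob n x]/frob (linext_comp (linext_lin _)).
apply: eq_linext => s; rewrite linextU (linext_comp (frob_lin n)).
rewrite [frob n y]/frob (linext_comp (linext_lin _)).
by apply: eq_linext => t; rewrite linextU frobQ.
Qed.

Lemma frob_comul n x : qcomul (frob n x) = frob2 n (qcomul x).
Proof.
rewrite /qcomul [frob n x]/frob (linext_comp (linext_lin _)).
rewrite /frob2 (linext_comp (linext_lin _)).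
apply: eq_linext => s; rewrite linextU (islin_sum (linext_lin _)) size_map.
by apply: eq_bigr => i _; rewrite linextU /= map_take map_drop.
Qed.

Lemma frob_comp n m x : frob n (frob m x) = frob (n * m) x.
Proof.
rewrite [frob m x]/frob (linext_comp (frob_lin n)); apply: eq_linext => s.
by rewrite frobU -map_comp; congr << _ >>; apply: eq_map => a /=; rewrite mulnA.
Qed.

Lemma frob_inj n : (0 < n)%N -> injective (map (muln n)).
Proof. by move=> n0; apply: inj_map => a b /eqP; rewrite eqn_mul2l eqn0Ngt n0 => /eqP. Qed.

Lemma frob_coef n x s : (0 < n)%N -> (frob n x)@_s =
  if all (fun a => n %| a)%N s then x@_(map (divn^~ n) s) else 0.
Proof.
move=> n0; case: ifP => [alls|nalls].
  have es : s = map (muln n) (map (divn^~ n) s).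
    rewrite -map_comp -[LHS]map_id; apply/eq_in_map => a /(allP alls) /= na.
    by rewrite mulnC divnK.
  by rewrite {1}es [frob _ _]/frob linext_inj //; apply: frob_inj.
rewrite [frob _ _]/frob linext_notim // => k; apply/eqP => ek.
move: nalls; rewrite -ek; case/negP; apply/allP => a /mapP[b _ ->]; exact: dvdn_mulr.
Qed.

Section Tower.
Variable p : nat.

Fixpoint PR (k : nat) : comNzRingType :=
  match k with
  | 0 => GRing.ComNzRing.clone 'F_p _
  | k'.+1 => GRing.ComNzRing.clone {poly PR k'} _
  end.

Fixpoint G (k : nat) (s : seq nat) {struct k} : PR k :=
  match k return PR k with
  | 0 => (s == [::])%:R
  | k'.+1 => ((G k' s)%:P + (if s is a :: s' then (G k' s')%:P * 'X^a else 0) : {poly PR k'})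
  end.

Lemma G_nil k : G k [::] = 1.
Proof. by elim: k => [|k IH] //=; rewrite IH addr0. Qed.

End Tower.

Section Tower2.
Variable p : nat.
Local Notation G := (G p).

Lemma G_cons k a s : G k.+1 (a :: s) = (G k (a :: s))%:P + (G k s)%:P * 'X^a.
Proof. by []. Qed.

Lemma sum_cons k c (L : seq (seq nat)) :
  \sum_(u <- map (cons c) L) G k.+1 u =
  (\sum_(u <- L) G k (c :: u))%:P + (\sum_(u <- L) G k u)%:P * 'X^c.
Proof.
rewrite big_map big_split /= !rmorph_sum mulr_suml; congr (_ + _).
Qed.

Lemma G0_cons c L : \sum_(u <- map (cons c) L) G 0 u = 0.
Proof. by rewrite big_map big1. Qed.

Lemma G_mul k s t : G k s * G k t = \sum_(u <- qsh s t) G k u.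
Proof.
case: s => [|a s]; first by rewrite G_nil mul1r /= big_seq1.
case: t => [|b t]; first by rewrite G_nil mulr1 qsh_nil_r big_seq1.
elim: k a s b t => [|k IH] a s b t.
  by rewrite qsh_cons !big_cat !G0_cons /= !addr0 mulr0.
rewrite qsh_cons !big_cat !sum_cons.
have IHg s' t' : G k s' * G k t' = \sum_(u <- qsh s' t') G k u.
  case: s' => [|a' s']; first by rewrite G_nil mul1r /= big_seq1.
  case: t' => [|b' t']; first by rewrite G_nil mulr1 qsh_nil_r big_seq1.
  exact: IH.
rewrite -!IHg.
have H := IH a s b t; rewrite qsh_cons !big_cat !big_map in H.
move: H.
set S1 := \sum_(u <- qsh s (b :: t)) G k (a :: u).
set S2 := \sum_(u <- qsh (a :: s) t) G k (b :: u).
set S3 := \sum_(u <- qsh s t) G k ((a + b)%N :: u).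
rewrite /= => H.
have -> : S1 = G k (a :: s) * G k (b :: t) - S2 - S3 by rewrite H; ring.
rewrite !rmorphB !rmorphM exprD /=; ring.
Qed.
End Tower2.

Section Tower3.
Variable p : nat.
Hypothesis pp : prime p.
Local Notation G := (G p).

Lemma PR_pchar k : p \in [pchar (PR p k)].
Proof.
elim: k => [|k IH]; first exact: pchar_Fp.
by rewrite /= (pchar_poly (PR p k)).
Qed.

Lemma G_frob k s : G k (map (muln p) s) = (G k s) ^+ p.
Proof.
elim: k s => [|k IH] [|a s].
- by rewrite /= expr1n.
- by rewrite /= expr0n eqn0Ngt prime_gt0.
- by rewrite [map _ _]/= !G_nil expr1n.
rewrite [map _ _]/= !G_cons -map_cons !IH.
have chR := PR_pchar k.+1.
rewrite !rmorphXn /= mulnC exprM -!(pFrobenius_autE chR) rmorphD rmorphM /=.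
by [].
Qed.
End Tower3.

Section Lto.
Variable V : zmodType.
Implicit Types (g : seq nat -> V) (x y : QS).

Definition lto g x : V := \sum_(k <- msupp x) g k *~ x@_k.

Lemma lto_sub g x (B : {fset seq nat}) : (msupp x `<=` B)%fset ->
  lto g x = \sum_(k <- B) g k *~ x@_k.
Proof.
move=> sub; rewrite /lto; apply: big_fset_incl => // k _ kn.
by rewrite mcoeff_outdom // mulr0z.
Qed.

Lemma lto_lin g (a : int) x y : lto g (a *: x + y) = lto g x *~ a + lto g y.
Proof.
set B := (msupp (a *: x + y) `|` (msupp x `|` msupp y))%fset.
rewrite (@lto_sub g (a *: x + y) B) ?fsubsetUl //.
rewrite (@lto_sub g x B); last by rewrite /B fsubsetU // fsubsetUl orbT.
rewrite (@lto_sub g y B); last by rewrite /B fsubsetU // fsubsetUr orbT.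
rewrite mulrz_suml -big_split /=; apply: eq_bigr => k _.
by rewrite mcoeffD mcoeffZ mulrzDr_tmp mulrC mulrzA.
Qed.

Lemma lto0 g : lto g 0 = 0.
Proof. by rewrite /lto msupp0 big_nil. Qed.
Lemma ltoD g x y : lto g (x + y) = lto g x + lto g y.
Proof. by rewrite -{1}[x]scale1r lto_lin mulr1z. Qed.
Lemma ltoZ g a x : lto g (a *: x) = lto g x *~ a.
Proof. by rewrite -[a *: x]addr0 lto_lin lto0 addr0. Qed.
Lemma ltoB g x y : lto g (x - y) = lto g x - lto g y.
Proof. have -> : x - y = (-1) *: y + x by rewrite scaleN1r addrC. by rewrite lto_lin mulrN1z addrC. Qed.
Lemma lto_sum g I (r : seq I) (v : I -> QS) :
  lto g (\sum_(i <- r) v i) = \sum_(i <- r) lto g (v i).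
Proof. exact: (big_morph (lto g) (ltoD g) (lto0 g)). Qed.

Lemma ltoU g k : lto g << k >> = g k.
Proof. by rewrite /lto msuppU oner_eq0 big_seq_fset1 mcoeffUU mulr1z. Qed.

Lemma lto_linext g (h : seq nat -> QS) x : lto g (linext h x) = lto (fun k => lto g (h k)) x.
Proof. by rewrite /linext lto_sum; apply: eq_bigr => k _; rewrite ltoZ. Qed.

Lemma eq_lto g g' x : (forall k, g k = g' k) -> lto g x = lto g' x.
Proof. by move=> e; rewrite /lto; apply: eq_bigr => k _; rewrite e. Qed.

Lemma lto_sumU g L : lto g (\sum_(u <- L) << u >>) = \sum_(u <- L) g u.
Proof. by rewrite lto_sum; apply: eq_bigr => u _; rewrite ltoU. Qed.
End Lto.

Lemma sum_mul_gen (R : comNzRingType) (I : Type) (A B : seq I) (f g : I -> R) (a b : I -> int) :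
  \sum_(s <- A) (\sum_(t <- B) (f s * g t) *~ b t) *~ a s =
  (\sum_(s <- A) f s *~ a s) * (\sum_(t <- B) g t *~ b t).
Proof.
rewrite mulr_suml; apply: eq_bigr => s _.
by rewrite mulrzAl mulr_sumr !mulrz_suml; apply: eq_bigr => t _; rewrite mulrzAr.
Qed.

Section Phi.
Variable p : nat.
Definition Phi k (x : QS) : PR p k := lto (G p k) x.

Lemma Phi_mul k x y : Phi k (qmul x y) = Phi k x * Phi k y.
Proof.
have E1 s t : lto (G p k) (Q s t) = G p k s * G p k t by rewrite /Q lto_sumU G_mul.
have E2 s : lto (G p k) (linext (Q s) y) = \sum_(t <- msupp y) (G p k s * G p k t) *~ y@_t.
  by rewrite lto_linext (eq_lto _ (E1 s)).
rewrite /Phi qmulE lto_linext (eq_lto _ E2) /lto; exact: sum_mul_gen.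
Qed.

Lemma Phi_one k : Phi k qone = 1.
Proof. by rewrite /Phi /qone ltoU G_nil. Qed.

Lemma Phi_exp k x n : Phi k (qexp x n) = Phi k x ^+ n.
Proof.
elim: n => [|n IH]; first by rewrite expr0 Phi_one.
by rewrite /qexp iterS -/(qexp x n) Phi_mul IH exprS.
Qed.

Hypothesis pp : prime p.

Lemma Phi_frob k x : Phi k (frob p x) = Phi k x ^+ p.
Proof.
have chR := PR_pchar pp k.
rewrite /Phi /frob lto_linext (eq_lto _ (fun s => ltoU (G p k) (map (muln p) s))).
rewrite -(pFrobenius_autE chR) /lto rmorph_sum; apply: eq_bigr => s _.
by rewrite raddfMz /= pFrobenius_autE G_frob.
Qed.

Lemma Phi_cong k x : Phi k (frob p x - qexp x p) = 0.
Proof. by rewrite /Phi ltoB -/(Phi k _) -/(Phi k _) Phi_frob Phi_exp subrr. Qed.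
End Phi.

Section Ext.
Variable p : nat.

Fixpoint E (k : nat) : seq nat -> PR p k -> 'F_p :=
  match k return seq nat -> PR p k -> 'F_p with
  | 0 => fun _ f => f
  | k'.+1 => fun s (f : {poly PR p k'}) => @E k' (behead s) f`_(head 0%N s)
  end.

Arguments E : clear implicits.

Lemma E_add k s f g : E k s (f + g) = E k s f + E k s g.
Proof. by elim: k s f g => [|k IH] s f g //=; rewrite coefD IH. Qed.
Lemma E_0 k s : E k s 0 = 0.
Proof. by elim: k s => [|k IH] s //=; rewrite coef0 IH. Qed.
Lemma E_Mz k s f z : E k s (f *~ z) = E k s f *~ z.
Proof. by elim: k s f => [|k IH] s f //=; rewrite coefMrz IH. Qed.
Lemma E_sum k s I (r : seq I) (v : I -> PR p k) :
  E k s (\sum_(i <- r) v i) = \sum_(i <- r) E k s (v i).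
Proof. elim: r => [|i r IH]; first by rewrite !big_nil E_0. by rewrite !big_cons E_add IH. Qed.

Lemma E_G s u : is_comp s -> E (size s) s (G p (size s) u) = (u == s)%:R.
Proof.
elim: s u => [|a s IH] u; first by [].
move=> /andP[a0 cs] /=.
case: u => [|b u].
  by rewrite G_nil addr0 coefC gtn_eqF // E_0.
rewrite coefD coefC gtn_eqF // add0r coefMXn coefC eqseq_cons.
case: (ltngtP a b) => ab.
- by rewrite E_0.
- rewrite ifN ?E_0 //; apply/negP => /eqP H.
  by move: ab; rewrite ltnNge -subn_eq0 H.
- by rewrite ab subnn eqxx IH.
Qed.

Lemma E_Phi s y : is_comp s -> E (size s) s (Phi p (size s) y) = (y@_s)%:~R.
Proof.
move=> cs; rewrite /Phi /lto E_sum -(sum_coef_eq y s) rmorph_sum.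
apply: eq_bigr => u _; rewrite E_Mz E_G //.
by case: eqP => _; rewrite ?mulr1 ?mulr0 ?mul0rz.
Qed.
End Ext.

Lemma inQP (x : QS) : inQSymm x <-> forall s, ~~ is_comp s -> x@_s = 0.
Proof.
split => H s.
  by move=> ns; apply: mcoeff_outdom; apply: contra ns; apply: H.
by move=> sin; apply/negPn/negP => ns; move: sin; rewrite -mcoeff_neq0 H.
Qed.

Lemma comp_map n k : (0 < n)%N -> is_comp k -> is_comp (map (muln n) k).
Proof.
move=> n0 ck; rewrite /is_comp all_map; apply/allP => a ak /=.
by rewrite muln_gt0 n0 /=; move/allP: ck => /(_ a ak).
Qed.

Lemma inQ_frob n x : (0 < n)%N -> inQSymm x -> inQSymm (frob n x).
Proof.
move=> n0 /inQP xQ; apply/inQP => s ns; rewrite linext_zero // => k kin.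
rewrite mcoeffU; case: eqP => // ek; case/negP: ns; rewrite -ek.
apply: comp_map => //; apply/negPn/negP => nk.
by move: kin; rewrite -mcoeff_neq0 xQ // eqxx.
Qed.

Lemma sumU_coef (L : seq (seq nat)) s :
  (\sum_(u <- L) (<< u >> : QS))@_s = \sum_(u <- L) ((u == s)%:R : int).
Proof.
elim: L => [|u L IH]; first by rewrite !big_nil mcoeff0.
by rewrite !big_cons mcoeffD IH mcoeffU.
Qed.

Lemma inQ_qmul x y : inQSymm x -> inQSymm y -> inQSymm (qmul x y).
Proof.
move=> xQ yQ; apply/inQP => s ns; rewrite qmulE linext_zero // => k kin.
rewrite linext_zero // => t tin; rewrite /Q sumU_coef big_seq big1 // => u uin.
have : all is_comp (qsh k t) by apply: qsh_comp; [exact: xQ | exact: yQ].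
move/allP => /(_ u uin) cu.
by case: eqP => // eu; move: ns; rewrite -eu cu.
Qed.

Lemma inQ_qone : inQSymm qone.
Proof. by apply/inQP => s ns; rewrite mcoeffU; case: eqP ns => // <-. Qed.

Lemma inQ_qexp x n : inQSymm x -> inQSymm (qexp x n).
Proof.
move=> xQ; elim: n => [|n IH]; first exact: inQ_qone.
by rewrite /qexp iterS; apply: inQ_qmul.
Qed.

Lemma inQ_B x y : inQSymm x -> inQSymm y -> inQSymm (x - y).
Proof.
move=> /inQP xQ /inQP yQ; apply/inQP => s ns.
by rewrite mcoeffB xQ // yQ // subr0.
Qed.

Lemma Fp_intr0 p (pp : prime p) (z : int) : (z%:~R : 'F_p) = 0 -> (p%:Z %| z)%Z.
Proof.
have Hn n : (n%:R : 'F_p) = 0 -> (p %| n)%N.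
  move=> H; have := val_Fp_nat pp n; rewrite H /= => e.
  by rewrite /dvdn -e.
case: z => n.
  by move=> /Hn; rewrite dvdzE.
move=> /eqP; rewrite NegzE mulrNz oppr_eq0 => /eqP /Hn.
by rewrite dvdzE.
Qed.

Unset Implicit Arguments.
Theorem mainTheorem6 :
  (* f_n is a Hopf algebra endomorphism of QSymm, for every n >= 1 *)
  (forall n : nat, (0 < n)%N ->
     (forall x, inQSymm x -> inQSymm (frob n x))
     /\ (forall (a : int) (x y : QS),
           frob n (a *: x + y) = a *: frob n x + frob n y)
     /\ frob n qone = qone
     /\ (forall x y, inQSymm x -> inQSymm y ->
           frob n (qmul x y) = qmul (frob n x) (frob n y))
     /\ (forall x, inQSymm x -> qcomul (frob n x) = frob2 n (qcomul x))
     /\ (forall x, inQSymm x -> qcounit (frob n x) = qcounit x))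
  (* f_1 = id *)
  /\ (forall x, inQSymm x -> frob 1 x = x)
  (* f_n f_m = f_{nm} *)
  /\ (forall (n m : nat) x, (0 < n)%N -> (0 < m)%N -> inQSymm x ->
        frob n (frob m x) = frob (n * m) x)
  (* f_n preserves Symm and acts there as the Frobenius p_k |-> p_{nk} *)
  /\ (forall n : nat, (0 < n)%N ->
        (forall x, inSymm x -> inSymm (frob n x))
        /\ (forall k : nat, (0 < k)%N -> frob n (psum k) = psum (n * k)))
  (* f_p(x) = x^p mod p QSymm *)
  /\ (forall (p : nat) (x : QS), prime p -> inQSymm x ->
        forall s : seq nat, ((p%:Z) %| (frob p x - qexp x p)@_s)%Z).
Proof.
split.
  move=> n n0; split; first by move=> x; apply: inQ_frob.
  split; first by move=> a x y; apply: linextL.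
  split; first by rewrite /qone frobU.
  split; first by move=> x y _ _; apply: frob_mul.
  split; first by move=> x _; apply: frob_comul.
  by move=> x _; rewrite /qcounit frob_coef.
split.
  move=> x _; apply/malgP => s; rewrite frob_coef //.
  have -> : all (fun a => 1 %| a)%N s by apply/allP => a _; apply: dvd1n.
  by rewrite map_id_in // => a _; rewrite divn1.
split; first by move=> n m x _ _ _; apply: frob_comp.
split.
  move=> n n0; split; last by move=> k _; rewrite /psum frobU.
  move=> x [xQ xS]; split; first exact: inQ_frob.
  move=> s t st; rewrite !frob_coef // (perm_all _ st).
  by case: ifP => // _; apply: xS; apply: perm_map.
move=> p x pp xQ s.
have yQ : inQSymm (frob p x - qexp x p).
  by apply: inQ_B; [apply: inQ_frob; [exact: prime_gt0|] | apply: inQ_qexp].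
case cs: (is_comp s).
  have := E_Phi p (frob p x - qexp x p) cs.
  rewrite Phi_cong // E_0 => /esym; exact: Fp_intr0.
by move/inQP: yQ => -> //; rewrite cs.
Qed.
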